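(* For a conditionally stationary process over a finite alphabet, let $\mathcal{S}$ be its causal states and $\mathcal{R}$ the effective states of any partition $\eta$ of histories that is both deterministic and weakly prescient. Then $H[\mathcal{S}] \le H[\mathcal{R}]$; that is, the causal states have minimal statistical complexity among all deterministic, weakly prescient sets of states.
   Context: A discrete-time process $\ldots S_{-1}S_0S_1\ldots$ takes values in a finite alphabet $\mathcal{A}$; $\overleftarrow{S}$ is the semi-infinite past, $\overrightarrow{S}$ the future, $\overrightarrow{S}^L$ its first $L$ symbols. The process is conditionally stationary ($\Pr(\overrightarrow{S}_t\in A\mid\overleftarrow{S}_t=\overleftarrow{s})$ independent of $t$). A partition $\eta$ of histories (effective states, random variable $R=\eta(\overleftarrow{S})$) is prescient if $\Pr(\overrightarrow{S}^L=w\mid R=\eta(\overleftarrow{s}))=\Pr(\overrightarrow{S}^L=w\mid\overleftarrow{S}=\overleftarrow{s})$ for all $L\ge1$, all $w$, a.e. history; weakly prescient if this holds for $L=1$; deterministic if $\eta(\overleftarrow{s}_1)=\eta(\overleftarrow{s}_2)$ implies $\eta(\overleftarrow{s}_1a)=\eta(\overleftarrow{s}_2a)$ for every symbol $a$. The causal states are the cells of the partition in which two histories are equivalent iff they induce the same conditional distribution over all measurable future events; $\mathcal{S}=\epsilon(\overleftarrow{S})$ denotes the causal-state random variable. Statistical complexity of a set of states is the Shannon entropy of the state random variable. *)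

(* Defs.v *)
From HB Require Import structures.
From mathcomp Require Import all_boot all_order all_algebra.
From mathcomp Require Import all_classical all_reals all_analysis.
Set Implicit Arguments. Unset Strict Implicit. Unset Printing Implicit Defensive.
Import Order.TTheory GRing.Theory Num.Theory.
Local Open Scope classical_set_scope.
Local Open Scope ring_scope.

(* A history h : seqspace A is read backwards: h 0 is the most recent       *)
(* symbol, h 1 the one before, ...  A future f : seqspace A is read         *)
(* forwards: f 0 is the next symbol, f 1 the one after, ...                 *)
Definition cylinders (A : Type) : set (set (nat -> A)) :=
  [set C | exists (i : nat) (a : A), C = [set h | h i = a]].

Definition seqspace (A : pointedType) := g_sigma_algebraType (@cylinders A).

Definition extend (A : pointedType) (h : seqspace A) (a : A) : seqspace A :=
  fun k => if k is k'.+1 then h k' else a.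

Section process.
Context {R : realType} {d : measure_display} {T : measurableType d}
  {A : pointedType}.

Definition past (X : int -> T -> A) (t : int) (w : T) : seqspace A :=
  fun k => X (t - (k.+1)%:Z) w.

Definition future (X : int -> T -> A) (t : int) (w : T) : seqspace A :=
  fun k => X (t + k%:Z) w.

Definition is_process (X : int -> T -> A) : Prop :=
  forall (t : int) (a : A), measurable (X t @^-1` [set a]).

(* Conditional stationarity: one and the same (regular) conditional
   distribution kappa of the future given the past serves at every time t:
   Pr(S_t-> in F | <-S_t = h) = kappa h F, independently of t. *)
Definition cond_stationary (P : probability T R) (X : int -> T -> A)
    (kappa : R.-pker (seqspace A) ~> (seqspace A)) : Prop :=
  forall (t : int) (B F : set (seqspace A)), measurable B -> measurable F ->
    P (past X t @^-1` B `&` future X t @^-1` F)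
    = (\int[P]_(w in past X t @^-1` B) kappa (past X t w) F)%E.

Definition eff_state {S : Type} (eta : seqspace A -> S) (X : int -> T -> A)
    (t : int) (w : T) : S := eta (past X t w).

Definition cond_prob_state {S : Type} (P : probability T R)
    (X : int -> T -> A) (eta : seqspace A -> S) (t : int) (r : S) (a : A) : R :=
  fine (P (eff_state eta X t @^-1` [set r] `&` X t @^-1` [set a]))
  / fine (P (eff_state eta X t @^-1` [set r])).

Definition measurable_partition {S : Type} (eta : seqspace A -> S) : Prop :=
  forall r : S, measurable (eta @^-1` [set r]).

(* weak prescience: for L = 1, every word (symbol) a, and (at every time t)
   almost every history,  Pr(S_t = a | R_t = eta(h)) = Pr(S_t = a | <-S_t = h) *)
Definition weakly_prescient {S : Type} (P : probability T R)
    (X : int -> T -> A) (kappa : R.-pker (seqspace A) ~> (seqspace A))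
    (eta : seqspace A -> S) : Prop :=
  forall (t : int) (a : A),
    {ae P, forall w : T,
      (cond_prob_state P X eta t (eta (past X t w)) a)%:E
      = kappa (past X t w) [set f | f 0%N = a]}.

Definition deterministic {S : Type} (eta : seqspace A -> S) : Prop :=
  forall h1 h2 : seqspace A, eta h1 = eta h2 ->
    forall a : A, eta (extend h1 a) = eta (extend h2 a).

Definition causal_state (kappa : R.-pker (seqspace A) ~> (seqspace A))
    (h : seqspace A) : set (seqspace A) :=
  [set h' | forall F : set (seqspace A), measurable F -> kappa h' F = kappa h F].

(* Shannon entropy (in bits) of a state random variable f : T -> S.  If the
   distribution of f is discrete (its atoms carry total mass 1) this is
   - sum_r p_r log2 p_r; otherwise the entropy is +oo. *)
Definition entropy {S : choiceType} (P : probability T R) (f : T -> S)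
    : \bar R :=
  let p := fun r : S => fine (P (f @^-1` [set r])) in
  if (\esum_(r in [set: S]) (P (f @^-1` [set r])) == 1)%E
  then \esum_(r in [set: S]) (- (p r * (ln (p r) / ln 2)))%:E
  else +oo%E.

End process.

(* Main.v *)
Require Import Defs.
From HB Require Import structures.
From mathcomp Require Import all_boot all_order all_algebra.
From mathcomp Require Import all_classical all_reals all_analysis.
From mathcomp Require Import measurable_realfun lebesgue_measure ring lra zify.
Import Order.TTheory GRing.Theory Num.Theory.
Local Open Scope classical_set_scope.
Local Open Scope ring_scope.
Set Implicit Arguments. Unset Strict Implicit. Unset Printing Implicit Defensive.

Section seqspace_lemmas.
Context {A : pointedType}.
Local Notation H := (seqspace A).

Lemma seq_measurableE : @measurable _ H = <<s (@cylinders A) >>.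
Proof. by []. Qed.

Lemma cyl1_measurable (i : nat) (a : A) : measurable ([set h : H | h i = a]).
Proof. by apply: sub_sigma_algebra; exists i, a. Qed.

Definition wcyl (u : seq A) : set H :=
  [set h | forall i, (i < size u)%N -> h i = nth point u i].

Lemma wcyl_measurable u : measurable (wcyl u).
Proof.
have -> : wcyl u = \bigcap_i (if (i < size u)%N then [set h : H | h i = nth point u i] else setT).
  apply/seteqP; split => h.
    move=> hu i _ /=; case: ifP => // iu; exact: hu.
  move=> hu i iu; have := hu i I; by rewrite /= iu.
apply: bigcapT_measurable => i; case: ifP => _; first exact: cyl1_measurable.
exact: measurableT.
Qed.

Lemma wcyl_nil : wcyl [::] = setT.
Proof. by apply/seteqP; split => h // _ i. Qed.

End seqspace_lemmas.

Section proc.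
Context {R : realType} {d : measure_display} {T : measurableType d}
  {A : pointedType}.
Local Notation H := (seqspace A).
Variable X : int -> T -> A.
Hypothesis hX : is_process X.

Lemma past_measurable t : measurable_fun setT (past X t).
Proof.
eapply (@measurability _ _ _ H _ _ (@cylinders A)); first by [].
move=> _ [B [i [a ->]] <-].
rewrite setTI /past /preimage /=.
exact: hX.
Qed.

Lemma future_measurable t : measurable_fun setT (future X t).
Proof.
eapply (@measurability _ _ _ H _ _ (@cylinders A)); first by [].
move=> _ [B [i [a ->]] <-].
rewrite setTI /future /preimage /=.
exact: hX.
Qed.

Lemma past_pre t (B : set H) : measurable B -> measurable (past X t @^-1` B).
Proof. by move=> mB; rewrite -[_ @^-1` _]setTI; apply: past_measurable. Qed.

Lemma future_pre t (B : set H) : measurable B -> measurable (future X t @^-1` B).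
Proof. by move=> mB; rewrite -[_ @^-1` _]setTI; apply: future_measurable. Qed.

Lemma past_succ t w : past X (t + 1) w = extend (past X t w) (X t w).
Proof.
apply: funext => -[|k] /=; rewrite /past /=.
  by congr X; rewrite -addrA subrr addr0.
congr X; rewrite -[k.+2]addn1 PoszD opprD addrA; ring.
Qed.


Lemma future_cons t (a : A) (u : seq A) :
  future X t @^-1` wcyl (a :: u) =
  X t @^-1` [set a] `&` future X (t + 1) @^-1` wcyl u.
Proof.
apply/seteqP; split => w /=.
  move=> hw; split.
    by have := hw 0%N isT; rewrite /future /= addr0.
  move=> i iu; have := hw i.+1 iu; rewrite /future /=.
  by have -> : t + 1 + i%:Z = t + i.+1%:Z by lia.
move=> [hw1 hw2] [|i] /= iu; first by rewrite /future addr0.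
have := hw2 i iu; rewrite /future /=.
by have -> : t + 1 + i%:Z = t + i.+1%:Z by lia.
Qed.

Lemma future_first t (a : A) :
  future X t @^-1` [set f : H | f 0%N = a] = X t @^-1` [set a].
Proof. by apply/seteqP; split => w /=; rewrite /future addr0. Qed.

Definition tailB (B : set H) (a : A) : set H :=
  [set h : H | h 0%N = a /\ B (fun k => h k.+1)].

Definition htail (h : H) : H := fun k => h k.+1.

Lemma tail_measurable : measurable_fun setT htail.
Proof.
eapply (@measurability _ _ H H _ _ (@cylinders A)); first by [].
move=> _ [B [i [a ->]] <-].
rewrite setTI /preimage /=.
exact: (cyl1_measurable i.+1 a).
Qed.

Lemma tailB_measurable B a : measurable B -> measurable (tailB B a).
Proof.
move=> mB.
have -> : tailB B a = [set h : H | h 0%N = a] `&` (htail @^-1` B).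
  by [].
apply: measurableI; first exact: cyl1_measurable.
by rewrite -[_ @^-1` _]setTI; apply: tail_measurable.
Qed.

Lemma past_tail t B a :
  past X (t + 1) @^-1` tailB B a = past X t @^-1` B `&` X t @^-1` [set a].
Proof.
apply/seteqP; split => w /=; rewrite /tailB /= past_succ /=.
  by move=> [-> hb]; split => //; move: hb; congr B; apply: funext.
move=> [hb ->]; split => //; move: hb; congr B; apply: funext.
Qed.

End proc.

Section words.
Context {A : pointedType}.
Local Notation H := (seqspace A).
Variable la : seq A.
Hypothesis hla : forall a : A, a \in la.

Definition wd (k : nat) : seq A :=
  map (nth point la) (odflt [::] (unpickle k : option (seq nat))).

Lemma wd_surj u : exists k, wd k = u.
Proof.
exists (pickle (map (index^~ la) u)); rewrite /wd pickleK /= -map_comp.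
rewrite -[RHS]map_id; apply: eq_map => a /=.
exact: nth_index.
Qed.

Definition Gw : set (set H) := [set C | C = set0 \/ exists u, C = wcyl u].

Lemma wcylI u v : (size u <= size v)%N ->
  Gw (wcyl u `&` wcyl v).
Proof.
move=> uv.
case: (pselect (forall i, (i < size u)%N -> nth point u i = nth point v i)) => [hp|hn].
  right; exists v; apply/seteqP; split => h; first by case.
  move=> hv; split => // i iu; rewrite hp // hv //; exact: leq_trans iu uv.
left; move/existsNP: hn => [i /not_implyP [iu neq]].
apply/seteqP; split => h // [hu hv]; apply: neq.
by rewrite -hu // -hv // (leq_trans iu uv).
Qed.

Lemma Gw_setI : setI_closed Gw.
Proof.
move=> C D [->|[u ->]]; first by rewrite set0I; left.
move=> [->|[v ->]]; first by rewrite setI0; left.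
have [uv|vu] := leqP (size u) (size v); first exact: wcylI.
by rewrite setIC; apply: wcylI; exact: ltnW.
Qed.

Lemma cyl1_bigcup (i : nat) (a : A) :
  [set h : H | h i = a] =
  \bigcup_k (if (size (wd k) == i.+1) && (nth point (wd k) i == a)
             then wcyl (wd k) else set0).
Proof.
apply/seteqP; split => h /=.
  move=> hia; have [k hk] := wd_surj (mkseq h i.+1).
  exists k => //; rewrite hk size_mkseq eqxx nth_mkseq // hia eqxx /=.
  by move=> j; rewrite size_mkseq => ji; rewrite nth_mkseq.
move=> [k _]; case: ifP => // /andP[/eqP sk /eqP nk] hk.
by rewrite -nk; apply: hk; rewrite sk.
Qed.

Lemma seq_measurable_Gw : @measurable _ H = <<s Gw >>.
Proof.
rewrite seq_measurableE; apply/seteqP; split.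
  apply: smallest_sub; first exact: smallest_sigma_algebra.
  move=> _ [i [a ->]]; rewrite cyl1_bigcup.
  have [_ _ hU] := @smallest_sigma_algebra _ setT Gw.
  apply: hU => k; case: ifP => _; apply: sub_sigma_algebra.
    by right; exists (wd k).
  by left.
apply: smallest_sub; first exact: smallest_sigma_algebra.
move=> _ [->|[u ->]]; first by case: (@smallest_sigma_algebra _ setT (@cylinders A)).
exact: (wcyl_measurable u).
Qed.

Lemma measure_unique_wcyl {R : realType} (m1 m2 : {measure set H -> \bar R}) :
  (m1 setT < +oo)%E ->
  (forall u, m1 (wcyl u) = m2 (wcyl u)) ->
  forall F, measurable F -> m1 F = m2 F.
Proof.
move=> fin hu F mF.
apply: (measure_unique Gw (fun _ => setT)) => //.
- exact: seq_measurable_Gw.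
- exact: Gw_setI.
- by move=> _; right; exists [::]; rewrite wcyl_nil.
- by rewrite bigcup_const.
- by move=> _ [->|[u ->]]; rewrite ?measure0.
Qed.

End words.

Section main.
Context {R : realType} {d : measure_display} {T : measurableType d}
  {A : pointedType}.
Local Notation H := (seqspace A).
Variable P : probability T R.
Variable X : int -> T -> A.
Variable kappa : R.-pker H ~> H.
Variable S : choiceType.
Variable eta : H -> S.
Hypothesis hX : is_process X.
Hypothesis hcs : cond_stationary P X kappa.
Hypothesis hmp : measurable_partition eta.
Hypothesis hdet : deterministic eta.
Hypothesis hwp : weakly_prescient P X kappa eta.

Lemma kap_ge0 h U : (0 <= kappa h U)%E.
Proof. exact: measure_ge0. Qed.

Lemma kap_le1 h U : measurable U -> (kappa h U <= 1)%E.
Proof.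
move=> mU; rewrite -(@prob_kernel _ _ _ _ _ kappa h).
by apply: le_measure => //; rewrite inE.
Qed.

Lemma kap_fin h U : measurable U -> kappa h U = (fine (kappa h U))%:E.
Proof.
move=> mU; rewrite fineK // ge0_fin_numE ?kap_ge0 //.
by apply: (le_lt_trans (kap_le1 h mU)); rewrite ltey.
Qed.

Lemma kap_mfun t U : measurable U ->
  measurable_fun setT ((fun w => kappa (past X t w) U) : T -> \bar R).
Proof.
move=> mU; exact: (measurableT_comp (measurable_kernel kappa U mU) (past_measurable hX t)).
Qed.

Lemma kap_pre U (V : set (\bar R)) : measurable U -> measurable V ->
  measurable [set h : H | V (kappa h U)].
Proof.
move=> mU mV; have := measurable_kernel kappa U mU measurableT _ mV.
by rewrite setTI.
Qed.


Lemma Pfin (D : set T) : measurable D -> P D = (fine (P D))%:E.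
Proof.
move=> mD; rewrite fineK // ge0_fin_numE ?measure_ge0 //.
by apply: (le_lt_trans (probability_le1 P mD)); rewrite ltey.
Qed.

Lemma null_from_le (D : set T) (mD : measurable D) (a b : R) :
  (a < b) -> (b%:E * P D <= a%:E * P D)%E -> P D = 0%E.
Proof.
move=> ab; rewrite (Pfin mD) -!EFinM lee_fin => hle.
have x0 : 0 <= fine (P D) by apply: fine_ge0; exact: measure_ge0.
suff : fine (P D) = 0 by move=> ->.
apply/eqP; rewrite eq_le x0 andbT.
by rewrite -subr_le0; nra.
Qed.

Lemma const_ae t (r : S) (U : set H) (mU : measurable U) (g : R) (g0 : 0 <= g) :
  (forall B : set H, measurable B -> (forall h, B h -> eta h = r) ->
    (\int[P]_(w in past X t @^-1` B) kappa (past X t w) U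
       = g%:E * P (past X t @^-1` B))%E) ->
  {ae P, forall w, eta (past X t w) = r -> kappa (past X t w) U = g%:E}.
Proof.
move=> hB.
have mk : measurable_fun setT (fun h => kappa h U) := measurable_kernel kappa U mU.
have mkr : measurable_fun (eta @^-1` [set r]) (fun h => kappa h U).
  exact: measurable_funS mk.
pose Bup (n : nat) := eta @^-1` [set r] `&`
   [set h : H | ((g + n.+1%:R^-1)%:E <= kappa h U)%E].
pose Bdn (n : nat) := eta @^-1` [set r] `&`
   [set h : H | (kappa h U <= (g - n.+1%:R^-1)%:E)%E].
have mBup n : measurable (Bup n) by exact: emeasurable_fun_c_infty.
have mBdn n : measurable (Bdn n) by exact: emeasurable_fun_infty_c.
have eps n : 0 < n.+1%:R^-1 :> R by rewrite invr_gt0.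
have nup n : P (past X t @^-1` Bup n) = 0%E.
  have mD := past_pre hX t (mBup n).
  apply: (null_from_le mD (a:=g) (b:=g + n.+1%:R^-1)); first by rewrite ltrDl.
  rewrite -hB //; last by move=> h [].
  rewrite -integral_cst //.
  apply: ge0_le_integral => //.
  - by move=> w _; rewrite lee_fin; apply: addr_ge0 => //; exact: ltW.
  - exact: measurable_funS (kap_mfun t mU).
  - by move=> w [_ ?].
have ndn n : P (past X t @^-1` Bdn n) = 0%E.
  have mD := past_pre hX t (mBdn n).
  apply: (null_from_le mD (a:=g - n.+1%:R^-1) (b:=g)); first by rewrite ltrBlDr ltrDl.
  rewrite -hB //; last by move=> h [].
  rewrite -integral_cst //.
  apply: ge0_le_integral => //.
  - exact: measurable_funS (kap_mfun t mU).
  - by move=> w [_ ?].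
have aeup n : {ae P, forall w, ~ (past X t @^-1` Bup n) w}.
  exists (past X t @^-1` Bup n); split => //; first exact: past_pre.
  by move=> w /= /contrapT.
have aedn n : {ae P, forall w, ~ (past X t @^-1` Bdn n) w}.
  exists (past X t @^-1` Bdn n); split => //; first exact: past_pre.
  by move=> w /= /contrapT.
have h1 := @ae_foralln _ _ _ P (fun n w => ~ (past X t @^-1` Bup n) w) aeup.
have h2 := @ae_foralln _ _ _ P (fun n w => ~ (past X t @^-1` Bdn n) w) aedn.
have := @filterI _ (almost_everywhere P) (ae_filter_ringOfSetsType P) _ _ h1 h2.
apply: (@filterS _ (almost_everywhere P) (ae_filter_ringOfSetsType P)) => w [/= hu hd] er.
rewrite (kap_fin _ mU); congr (_%:E).
set x := fine _.
have hx : kappa (past X t w) U = x%:E by rewrite /x -kap_fin.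
have [gx|xg|//] := ltgtP g x.
- have [n hn] := ltr_add_invr gx.
  exfalso; apply: (hu n); split => //=.
  by rewrite hx lee_fin ltW.
- have [n hn] := ltr_add_invr xg.
  exfalso; apply: (hd n); split => //=.
  by rewrite hx lee_fin lerBrDr ltW.
Qed.

Lemma presc u : forall t r, exists c : R, 0 <= c /\
  {ae P, forall w, eta (past X t w) = r -> kappa (past X t w) (wcyl u) = c%:E}.
Proof.
elim: u => [|a u IH] t r.
  exists 1; split => //; apply: aeW => w _; rewrite wcyl_nil.
  exact: (@prob_kernel _ _ _ _ _ kappa).
case: (pselect (exists h0, eta h0 = r)) => [[h0 e0]|no]; last first.
  exists 0; split => //; apply: aeW => w er; exfalso; apply: no.
  by exists (past X t w).
have [c' [c'0 hc']] := IH (t + 1) (eta (extend h0 a)).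
set p := cond_prob_state P X eta t r a.
have p0 : 0 <= p.
  by apply: divr_ge0; apply: fine_ge0; apply: measure_ge0.
exists (c' * p); split; first exact: mulr_ge0.
apply: const_ae; [exact: wcyl_measurable|exact: mulr_ge0|].
move=> B mB hBr.
rewrite -hcs //; last exact: wcyl_measurable.
rewrite future_cons setIA -past_tail.
rewrite hcs //; [|exact: tailB_measurable|exact: wcyl_measurable].
have mTa := tailB_measurable a mB.
have mD := past_pre hX (t + 1) mTa.
transitivity (\int[P]_(w in past X (t + 1) @^-1` tailB B a) (cst c'%:E) w)%E.
  apply: ae_eq_integral => //.
  - exact: measurable_funS (kap_mfun (t + 1) (wcyl_measurable u)).
  - move: hc'; apply: (@filterS _ (almost_everywhere P) (ae_filter_ringOfSetsType P)).
    move=> w hw Dw; apply: hw.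
    have : (past X t @^-1` B `&` X t @^-1` [set a]) w by rewrite -past_tail.
    move=> [Bw Xw].
    rewrite past_succ Xw; apply: hdet.
    by rewrite e0; apply: hBr.
rewrite integral_cst // past_tail -future_first.
have hh := hcs t mB (cyl1_measurable 0 a).
transitivity (c'%:E * \int[P]_(w in past X t @^-1` B) kappa (past X t w) [set h : H | h 0%N = a])%E.
  by congr (_ * _)%E; exact: hh.
have mD0 := past_pre hX t mB.
transitivity (c'%:E * \int[P]_(w in past X t @^-1` B) (cst p%:E) w)%E.
  congr (_ * _)%E; apply: ae_eq_integral => //.
  - exact: measurable_funS (kap_mfun t (cyl1_measurable 0 a)).
  - move: (hwp t a); apply: (@filterS _ (almost_everywhere P) (ae_filter_ringOfSetsType P)).
    move=> w hw Dw; rewrite -hw /=.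
    by rewrite (hBr _ Dw).
by rewrite integral_cst // muleA -EFinM.
Qed.

Variable la : seq A.
Hypothesis hla : forall a : A, a \in la.

Lemma kap_finT h : (kappa h setT < +oo)%E.
Proof. by rewrite (@prob_kernel _ _ _ _ _ kappa h) ltey. Qed.

Lemma class_eq h1 h2 : (forall u, kappa h1 (wcyl u) = kappa h2 (wcyl u)) ->
  causal_state kappa h1 = causal_state kappa h2.
Proof.
move=> hu.
have hF := measure_unique_wcyl hla (kap_finT h1) hu.
apply/seteqP; split => h' hh F mF; first by rewrite hh // hF.
by rewrite hh // hF.
Qed.

Lemma class_self h : causal_state kappa h h.
Proof. by move=> F. Qed.

Lemma class_measurable h0 : measurable (causal_state kappa h0).
Proof.
have -> : causal_state kappa h0 =
    \bigcap_k [set h : H | kappa h (wcyl (wd la k)) = kappa h0 (wcyl (wd la k))].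
  apply/seteqP; split => h.
    by move=> hh k _; apply: hh; exact: wcyl_measurable.
  move=> hh; apply: (measure_unique_wcyl hla (kap_finT h)) => u.
  have [k <-] := wd_surj hla u; exact: hh.
apply: bigcapT_measurable => k.
exact: (kap_pre (V := [set kappa h0 (wcyl (wd la k))])
  (wcyl_measurable _) (emeasurable_set1 _)).
Qed.

Lemma causal_pre t (c : set H) :
  measurable ((fun w => causal_state kappa (past X t w)) @^-1` [set c]).
Proof.
case: (pselect (exists h0, c = causal_state kappa h0)) => [[h0 ->]|no].
  have -> : (fun w => causal_state kappa (past X t w)) @^-1` [set causal_state kappa h0]
      = past X t @^-1` causal_state kappa h0.
    apply/seteqP; split => w /=.
      by move=> <-; exact: class_self.
    move=> hw; apply/seteqP; split => h' hh F mF.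
      by rewrite hh // hw.
    by rewrite hh // hw.
  exact: (past_pre hX t (class_measurable h0)).
have -> : (fun w => causal_state kappa (past X t w)) @^-1` [set c] = set0.
  apply/seteqP; split => w //= e; apply: no; by exists (past X t w).
exact: measurable0.
Qed.

Lemma cell_const t r : exists C : set H,
  {ae P, forall w, eta (past X t w) = r -> causal_state kappa (past X t w) = C}.
Proof.
have /choice [c hc] := fun k => presc (wd la k) t r.
have hall := @ae_foralln _ _ _ P
  (fun k w => eta (past X t w) = r ->
     kappa (past X t w) (wcyl (wd la k)) = (c k)%:E) (fun k => (hc k).2).
case: (pselect (exists w0, eta (past X t w0) = r /\ forall k, eta (past X t w0) = r ->
     kappa (past X t w0) (wcyl (wd la k)) = (c k)%:E)) => [[w0 [e0 h0]]|no].
  exists (causal_state kappa (past X t w0)).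
  move: hall; apply: (@filterS _ (almost_everywhere P) (ae_filter_ringOfSetsType P)).
  move=> w hw er; apply: class_eq => u.
  have [k <-] := wd_surj hla u.
  by rewrite hw // h0.
exists set0.
move: hall; apply: (@filterS _ (almost_everywhere P) (ae_filter_ringOfSetsType P)).
move=> w hw er; exfalso; apply: no; by exists w.
Qed.

End main.

Section entropy_cmp.
Context {R : realType} {d : measure_display} {T : measurableType d}.
Variable P : probability T R.
Context {S C : choiceType}.
Variables (e : T -> S) (f : T -> C) (g : S -> C).
Hypothesis mE : forall r, measurable (e @^-1` [set r]).
Hypothesis mF : forall c, measurable (f @^-1` [set c]).
Hypothesis hg : forall r, {ae P, forall w, e w = r -> f w = g r}.

Local Notation E r := (e @^-1` [set r]).
Local Notation F c := (f @^-1` [set c]).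

Lemma null_of_ae (M : set T) : measurable M -> {ae P, forall w, ~ M w} -> P M = 0%E.
Proof.
move=> mM [N [mN PN sub]].
apply/eqP; rewrite eq_le measure_ge0 andbT -PN.
apply: le_measure; rewrite ?inE //.
by move=> w Mw; apply: sub => /=; apply.
Qed.

Lemma EdF r c : g r = c -> P (E r `\` F c) = 0%E.
Proof.
move=> grc; apply: null_of_ae; first exact: measurableD.
move: (hg r); apply: (@filterS _ (almost_everywhere P) (ae_filter_ringOfSetsType P)).
by move=> w hw [/= er nf]; apply: nf => /=; rewrite hw.
Qed.

Lemma EIF r c : g r <> c -> P (E r `&` F c) = 0%E.
Proof.
move=> grc; apply: null_of_ae; first exact: measurableI.
move: (hg r); apply: (@filterS _ (almost_everywhere P) (ae_filter_ringOfSetsType P)).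
by move=> w hw [/= er fc]; apply: grc; rewrite -fc hw.
Qed.

Lemma EF r c : g r = c -> P (E r) = P (E r `&` F c).
Proof.
move=> grc; apply: (etrans (measureDI P (mE r) (mF c))).
rewrite -[RHS]add0e; congr (_ + _)%E; exact: EdF.
Qed.

Lemma triv_EF c (X : set S) : trivIset X (fun r => E r `&` F c).
Proof. by move=> i j _ _ [w [[/= ei _] [/= ej _]]]; rewrite -ei -ej. Qed.

Lemma triv_E (X : set S) : trivIset X (fun r => E r).
Proof. by move=> i j _ _ [w [/= ei /= ej]]; rewrite -ei -ej. Qed.

Lemma K_ge c : (\esum_(r in g @^-1` [set c]) P (E r) <= P (F c))%E.
Proof.
apply: ge_ereal_sup => _ [X [finX XJ] <-].
rewrite (eq_fsbigr (fun r => P (E r `&` F c))); last first.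
  by move=> r /set_mem /XJ /= grc; exact: EF.
rewrite -measure_fin_bigcup //; last by move=> r _; exact: measurableI.
- apply: le_measure; rewrite ?inE //.
  + by apply: fin_bigcup_measurable => // r _; exact: measurableI.
  + by move=> w [r _ []].
- exact: triv_EF.
Qed.


Lemma Pfin' (D : set T) : measurable D -> P D = (fine (P D))%:E.
Proof.
move=> mD; rewrite fineK // ge0_fin_numE ?measure_ge0 //.
by apply: (le_lt_trans (probability_le1 P mD)); rewrite ltey.
Qed.

Lemma K_le c : (\esum_(r in [set: S]) P (E r) = 1)%E ->
  (P (F c) <= \esum_(r in g @^-1` [set c]) P (E r))%E.
Proof.
move=> hR; apply/lee_addgt0Pr => eps eps0.
have fin : ereal_sup [set (\sum_(x \in A0) P (E x))%R | A0 in fsets [set: S]]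
    \is a fin_num.
  by move: hR; rewrite /esum => ->.
have [_ [X [finX _] <-] hX] := ub_ereal_sup_adherent eps0 fin.
move: hX; rewrite -/(esum _ _) hR => hX.
set U := \bigcup_(r in X) E r.
have mU : measurable U by apply: fin_bigcup_measurable.
have PU : P U = (\sum_(r \in X) P (E r))%R.
  by rewrite measure_fin_bigcup //; exact: triv_E.
rewrite -PU in hX.
have h1 : (P (F c `\` U) <= 1 - P U)%E.
  rewrite -(probability_setC P mU).
  apply: le_measure; [rewrite inE; exact: measurableD|rewrite inE; exact: measurableC|by move=> w []].
have h2 : (P (F c `&` U) <= \esum_(r in g @^-1` [set c]) P (E r))%E.
  have -> : F c `&` U = \bigcup_(r in X) (E r `&` F c).
    apply/seteqP; split => w.
      by move=> [fw [r Xr er]]; exists r.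
    by move=> [r Xr [er fw]]; split => //; exists r.
  rewrite measure_fin_bigcup //; last by move=> r _; exact: measurableI.
  + rewrite esum_mkcond.
    apply: (@le_trans _ _ (\sum_(r \in X) (if r \in g @^-1` [set c] then P (E r) else 0))%R).
      apply: lee_fsum => // r Xr.
      case: ifPn => [_|].
        by apply: le_measure; [rewrite inE; exact: measurableI|rewrite inE; exact: mE|move=> w []].
      move=> /negP hn; apply: (@le_trans _ _ (P (E r `&` F c))); first exact: lexx.
      by rewrite EIF //; move=> grc; apply: hn; rewrite inE; exact: grc.
    apply: esum_ge; exists X => //.
  + exact: triv_EF.
have h3 : (1 - P U <= eps%:E)%E.
  move: hX; rewrite (Pfin' mU) -EFinB !lte_fin lee_fin => hX; lra.
apply: (@le_trans _ _ (P (F c `\` U) + P (F c `&` U))%E).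
  rewrite le_eqVlt; apply/orP; left; apply/eqP; exact: (measureDI P (mF c) mU).
rewrite addeC; apply: leeD => //; exact: le_trans h1 h3.
Qed.

Lemma regroup (a : S -> \bar R) : (forall r, (0 <= a r)%E) ->
  \esum_(c in [set: C]) \esum_(r in g @^-1` [set c]) a r = \esum_(r in [set: S]) a r.
Proof.
move=> a0; rewrite esum_esum; last by move=> *; exact: a0.
rewrite (reindex_esum [set: S] _ (fun r => (g r, r))) //.
split.
- by move=> r _ /=; split.
- by move=> r1 r2 _ _ [].
- by move=> [c r] [_ /= grc]; exists r => //=; rewrite grc.
Qed.

Lemma esum_mulr (J : set S) (a : S -> \bar R) (k : R) : 0 <= k -> (forall r, (0 <= a r)%E) ->
  ((\esum_(r in J) a r) * k%:E <= \esum_(r in J) (a r * k%:E))%E.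
Proof.
move=> k0 a0; rewrite muleC /esum -ereal_supZl //; last first.
  apply/set0P; exists 0%E; exists set0; first exact: fsets_set0.
  by rewrite fsbig_set0.
apply: ge_ereal_sup => _ [_ [X [finX XJ] <-] <-].
apply: ereal_sup_ubound; exists X => //.
rewrite !fsbig_finite // ge0_sume_distrr //.
by apply: eq_bigr => r _; rewrite muleC.
Qed.

Lemma phi_ge0 (x : R) : x <= 1 -> 0 <= - (x * (ln x / ln 2)).
Proof.
move=> x1; have l2 : 0 < ln (2 : R) by apply: ln_gt0; lra.
have [x0|x0] := leP x 0; first by rewrite ln0 // mul0r mulr0 oppr0.
rewrite oppr_ge0 mulr_ge0_le0 //; first exact: ltW.
by rewrite pmulr_lle0 ?invr_gt0 //; exact: ln_le0.
Qed.

Theorem entropy_le : (entropy P f <= entropy P e)%E.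
Proof.
rewrite /entropy /=.
case: ifPn => hL; case: ifPn => hR; rewrite ?leey //; last first.
  exfalso; move: hL => /negP; apply.
  move/eqP: hR => hR.
  have K c : P (F c) = \esum_(r in g @^-1` [set c]) P (E r).
    by apply/eqP; rewrite eq_le K_le // K_ge.
  by rewrite (eq_esum (fun c _ => K c)) regroup ?hR // => r; exact: measure_ge0.
move/eqP: hR => hR.
have K c : P (F c) = \esum_(r in g @^-1` [set c]) P (E r).
  by apply/eqP; rewrite eq_le K_le // K_ge.
have fle1 (D : set T) : measurable D -> fine (P D) <= 1.
  by move=> mD; rewrite -lee_fin -Pfin' //; exact: probability_le1.
have fge0 (D : set T) : 0 <= fine (P D).
  by apply: fine_ge0; exact: measure_ge0.
rewrite -(@regroup (fun r => (-(fine (P (E r)) * (ln (fine (P (E r))) / ln 2)))%:E)); last first.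
  by move=> r; rewrite lee_fin; apply: phi_ge0; exact: fle1.
apply: le_esum => c _.
set q := fine (P (F c)).
have q1 : q <= 1 by exact: fle1.
have q0 : 0 <= q by exact: fge0.
have l2 : 0 < ln (2 : R) by apply: ln_gt0; lra.
have i0 : 0 < (ln (2 : R))^-1 by rewrite invr_gt0.
set k := -(ln q / ln 2).
have k0 : 0 <= k.
  rewrite /k oppr_ge0 pmulr_lle0 //.
  have [qz|qz] := leP q 0; first by rewrite ln0.
  exact: ln_le0.
have -> : -(q * (ln q / ln 2)) = q * k by rewrite /k mulrN.
rewrite EFinM (_ : q%:E = \esum_(r in g @^-1` [set c]) P (E r)); last first.
  by rewrite /q -Pfin' // K.
apply: le_trans (esum_mulr _ k0 _) _; first by move=> r; exact: measure_ge0.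
apply: le_esum => r /= grc.
set p := fine (P (E r)).
rewrite (Pfin' (mE r)) -/p -EFinM lee_fin.
have pq : p <= q.
  rewrite /p /q -lee_fin -!Pfin' // (EF grc).
  by apply: le_measure; [rewrite inE; exact: measurableI|rewrite inE; exact: mF|move=> w []].
have p0 : 0 <= p by exact: fge0.
have [pz|pz] := leP p 0.
  have -> : p = 0 by apply/eqP; rewrite eq_le pz p0.
  by rewrite !mul0r oppr0.
have lnpq : ln p <= ln q by rewrite ler_ln // posrE //; exact: (lt_le_trans pz pq).
have pi0 : 0 <= p * (ln (2 : R))^-1 by apply: mulr_ge0 => //; exact: ltW.
rewrite /k; nra.
Qed.
End entropy_cmp.

Unset Implicit Arguments.

Theorem mainTheorem2 (R : realType) (d : measure_display) (T : measurableType d)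
    (P : probability T R) (A : pointedType) (finA : finite_set [set: A])
    (X : int -> T -> A) (kappa : R.-pker (seqspace A) ~> (seqspace A))
    (S : choiceType) (eta : seqspace A -> S) :
  is_process X ->
  cond_stationary P X kappa ->
  measurable_partition eta ->
  deterministic eta ->
  weakly_prescient P X kappa eta ->
  forall t : int,
    (entropy P (fun w => causal_state kappa (past X t w))
     <= entropy P (eff_state eta X t))%E.
Proof.
move=> hX hcs hmp hdet hwp t.
have [X0 hX0] := (finite_fsetP (A:=[set: A])).1 finA.
have hla : forall a : A, a \in finmap.enum_fset X0.
  by move=> a; have : [set: A] a by []; rewrite hX0.
have /choice [g hg] := fun r => cell_const hX hcs hmp hdet hwp hla t r.
apply: (@entropy_le _ _ _ P _ _ (eff_state eta X t)
   (fun w => causal_state kappa (past X t w)) g).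
- by move=> r; exact: (past_pre hX t (hmp r)).
- by move=> c; exact: (causal_pre kappa hX hla t c).
- exact: hg.
Qed.
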